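(* Let $G$ be a group, $C$ a subgroup of $G$, and $\tau\colon G\to(2\mathbb{Z}+1)\cup\{0\}$ an ordering quasi-morphism with kernel $C$. Then $P=\{(g,n)\in G\times\mathbb{Z}:\tau(g)+2n>0\}$ is a positive cone relative to $C\times\{0\}$ for $G\times\mathbb{Z}$.
   Context: An ordering quasi-morphism is a function $\tau\colon G\to\mathbb{Z}$ such that (i) $C=\{g:\tau(g)=0\}$ is a subgroup of $G$ (called the kernel), (ii) $\tau(g^{-1})=-\tau(g)$ for all $g$, (iii) $\tau(g)+\tau(h)+\tau((gh)^{-1})\le1$ for all $g,h\in G$. For a group $H$ and subgroup $K$, a positive cone relative to $K$ is a subsemigroup $P\subseteq H$ with $H=P\sqcup K\sqcup P^{-1}$ (disjoint union). *)

(* Defs.v *)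
From Stdlib Require Import ZArith.
Open Scope Z_scope.

Definition is_group {G : Type} (mul : G -> G -> G) (one : G) (inv : G -> G) : Prop :=
  (forall x y z, mul (mul x y) z = mul x (mul y z)) /\
  (forall x, mul one x = x) /\ (forall x, mul x one = x) /\
  (forall x, mul (inv x) x = one) /\ (forall x, mul x (inv x) = one).

Definition is_subgroup {G : Type} (mul : G -> G -> G) (one : G) (inv : G -> G)
  (C : G -> Prop) : Prop :=
  C one /\ (forall x y, C x -> C y -> C (mul x y)) /\ (forall x, C x -> C (inv x)).

Definition ordering_quasi_morphism {G : Type} (mul : G -> G -> G) (one : G)
  (inv : G -> G) (tau : G -> Z) : Prop :=
  is_subgroup mul one inv (fun g => tau g = 0) /\
  (forall g, tau (inv g) = - tau g) /\
  (forall g h, tau g + tau h + tau (inv (mul g h)) <= 1).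

Definition qm_kernel {G : Type} (tau : G -> Z) (C : G -> Prop) : Prop :=
  forall g, C g <-> tau g = 0.

Definition positive_cone_rel {H : Type} (mul : H -> H -> H) (inv : H -> H)
  (P K : H -> Prop) : Prop :=
  (forall x y, P x -> P y -> P (mul x y)) /\
  (forall x, P x \/ K x \/ P (inv x)) /\
  (forall x, ~ (P x /\ K x)) /\
  (forall x, ~ (P x /\ P (inv x))) /\
  (forall x, ~ (K x /\ P (inv x))).

Definition prodZ_mul {G : Type} (mul : G -> G -> G) (x y : G * Z) : G * Z :=
  (mul (fst x) (fst y), snd x + snd y).
Definition prodZ_inv {G : Type} (inv : G -> G) (x : G * Z) : G * Z :=
  (inv (fst x), - snd x).

(* Main.v *)
Require Import Defs.
From Stdlib Require Import ZArith Lia.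
Open Scope Z_scope.

Theorem proposition5p11 (G : Type) (mul : G -> G -> G) (one : G) (inv : G -> G)
  (C : G -> Prop) (tau : G -> Z) :
  is_group mul one inv ->
  is_subgroup mul one inv C ->
  (forall g, tau g = 0 \/ Z.odd (tau g) = true) ->
  ordering_quasi_morphism mul one inv tau ->
  qm_kernel tau C ->
  positive_cone_rel (prodZ_mul mul) (prodZ_inv inv)
    (fun x : G * Z => tau (fst x) + 2 * snd x > 0)
    (fun x : G * Z => C (fst x) /\ snd x = 0).
Proof.
  intros _ _ Hodd [_ [Hinv Hq]] Hker.
  unfold positive_cone_rel, prodZ_mul, prodZ_inv; cbn [fst snd].
  split; [|split; [|split; [|split]]].
  - intros [g n] [h m]; cbn [fst snd]; intros H1 H2.
    pose proof (Hq g h) as Q. rewrite Hinv in Q. lia.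
  - intros [g n]; cbn [fst snd]. rewrite Hinv.
    destruct (Z.lt_trichotomy (tau g + 2 * n) 0) as [Hl|[He|Hg]].
    + right; right; lia.
    + right; left.
      destruct (Hodd g) as [H0|H1].
      * split; [apply Hker; exact H0| lia].
      * exfalso. assert (Z.odd (tau g + 2 * n) = true) by (rewrite Z.odd_add_mul_2; exact H1).
        rewrite He in H. discriminate.
    + left; lia.
  - intros [g n]; cbn [fst snd]. intros [H1 [H2 H3]]. apply Hker in H2. lia.
  - intros [g n]; cbn [fst snd]. rewrite Hinv. lia.
  - intros [g n]; cbn [fst snd]. rewrite Hinv. intros [[H2 H3] H1]. apply Hker in H2. lia.
Qed.
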